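(* Let $\alpha\in\mathbb C$. For every integer $n\ge1$, the first column $k_n:=K_ne_1$ of $K_n:=A_\alpha^n-T\big((z+z^{-1})^n\big)$ satisfies $$k_n=\sum_{i=0}^{\lfloor (n-1)/2\rfloor}\binom{n}{i}h_{n-2i}.$$
   Context: All matrices are semi-infinite with rows and columns indexed by the positive integers; $e_1$ is the first column of the semi-infinite identity. $T(a)$ denotes the Toeplitz matrix with $(i,j)$ entry $a_{j-i}$ for $a(z)=\sum_{i\in\mathbb Z}a_iz^i$, and $A_\alpha:=T(z+z^{-1})+\alpha e_1e_1^T$ (tridiagonal, ones on sub- and superdiagonal, $(1,1)$ entry $\alpha$, zeros elsewhere). Let $\theta=\alpha^2-1$ and define the polynomials $h_1(z)=\alpha z$ and, for $n\ge 2$, $h_n(z)=\theta\sum_{i=1}^{n-1}\alpha^{n-i-1}z^i+\alpha z^n$. The same symbol $h_n$ denotes the semi-infinite column vector whose $i$-th entry is the coefficient of $z^i$ in $h_n(z)$ ($i\ge1$), padded with zeros. *)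

(* Defs.v *)
From mathcomp Require Import all_boot all_order all_algebra.
Set Implicit Arguments. Unset Strict Implicit. Unset Printing Implicit Defensive.
Import Order.TTheory GRing.Theory Num.Theory.
Local Open Scope ring_scope.

(* Semi-infinite matrices over C, rows/columns indexed by positive integers.
   We use functions nat -> nat -> C and only ever read entries with i, j >= 1;
   all constructions below put 0 at index 0. *)
Definition simx (C : Type) := nat -> nat -> C.

Section SemiInf.
Variable C : numClosedFieldType.

(* Coefficient a_k (k : int) of the Laurent polynomial (z + z^{-1})^n
   = z^{-n} (1 + z^2)^n. *)
Definition zpz_coef (n : nat) (k : int) : C :=
  match (k + n%:Z)%R with
  | Posz m => ((1 + 'X^2 : {poly C}) ^+ n)`_m
  | Negz _ => 0
  end.

Definition toeplitz (a : int -> C) : simx C :=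
  fun i j => if (0 < i)%N && (0 < j)%N then a (j%:Z - i%:Z) else 0.

Definition e11 : simx C := fun i j => if (i == 1%N) && (j == 1%N) then 1 else 0.

Definition Aalpha (alpha : C) : simx C :=
  fun i j => toeplitz (zpz_coef 1) i j + alpha * e11 i j.

Definition simx1 : simx C := fun i j => if (0 < i)%N && (i == j) then 1 else 0.

(* Matrix product A * B for a left factor A whose row i is supported in
   columns k <= i+1 (true for the tridiagonal A_alpha); then the series
   sum_{k>=1} A_ik B_kj reduces to this finite sum. *)
Definition mul_lower_hess (A B : simx C) : simx C :=
  fun i j => \sum_(1 <= k < i.+2) A i k * B k j.

Definition Apow (alpha : C) (n : nat) : simx C :=
  iter n (mul_lower_hess (Aalpha alpha)) simx1.

Definition Kmat (alpha : C) (n : nat) : simx C :=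
  fun i j => Apow alpha n i j - toeplitz (zpz_coef n) i j.

Definition kcol (alpha : C) (n : nat) : nat -> C := fun i => Kmat alpha n i 1%N.

Definition hpoly (alpha : C) (n : nat) : {poly C} :=
  if n == 1%N then alpha *: 'X
  else (alpha ^+ 2 - 1) *: (\sum_(1 <= i < n) alpha ^+ (n - i - 1) *: 'X^i)
       + alpha *: 'X^n.

End SemiInf.

(* Main.v *)
Require Import Defs.
From mathcomp Require Import all_boot all_order all_algebra.
From mathcomp Require Import zify ring.
Import Order.TTheory GRing.Theory Num.Theory.
Local Open Scope ring_scope.

Section Work.
Variable C : numClosedFieldType.
Variable alpha : C.

Definition G (n : nat) (phi : int -> C) : C :=
  \sum_(0 <= l < n.+1) 'C(n, l)%:R * phi (n%:Z - (2 * l)%N%:Z).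

Lemma G_add n f g : G n (fun m => f m + g m) = G n f + G n g.
Proof. by rewrite /G -big_split; apply: eq_bigr => l _; rewrite mulrDr. Qed.

Lemma G_sub n f g : G n (fun m => f m - g m) = G n f - G n g.
Proof. by rewrite /G -sumrB; apply: eq_bigr => l _; rewrite mulrBr. Qed.

Lemma G_ext n f g : (forall m, f m = g m) -> G n f = G n g.
Proof. by move=> H; apply: eq_bigr => l _; rewrite H. Qed.

Lemma G_pascal n phi :
  G n.+1 phi = G n (fun m => phi (m + 1)) + G n (fun m => phi (m - 1)).
Proof.
rewrite /G big_nat_recl // bin0.
under eq_bigr do rewrite binS natrD mulrDl.
rewrite big_split /= addrA; congr (_ + _).
  rewrite [in RHS]big_nat_recl // bin0 big_nat_recr //= bin_small // mul0r addr0.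
  congr (_ * phi _ + _); first lia.
  rewrite addr0.
  by apply: eq_bigr => l _; congr (_ * phi _); lia.
by apply: eq_bigr => l _; congr (_ * phi _); lia.
Qed.

Lemma G_sym n phi : G n phi = G n (fun m => phi (- m)).
Proof.
rewrite /G big_nat_rev /=; apply: eq_big_nat => l /andP [_ Hl].
rewrite add0n subSS bin_sub; last lia.
congr (_ * phi _); lia.
Qed.

Definition th := alpha ^+ 2 - 1.

Definition hn (m i : nat) : C :=
  if (0 < i < m)%N then th * alpha ^+ (m - i - 1)
  else if (i == m) && (0 < m)%N then alpha else 0.

Lemma hn_lt m i d : (0 < i)%N -> m = (i + d.+1)%N -> hn m i = th * alpha ^+ d.
Proof.
move=> Hi ->; rewrite /hn ifT; last lia.
by congr (_ * _ ^+ _); lia.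
Qed.

Lemma hn_eq m i : (0 < i)%N -> m = i -> hn m i = alpha.
Proof. by move=> Hi ->; rewrite /hn ifF ?eqxx ?Hi //; lia. Qed.

Lemma hn_gt m i : (m < i)%N -> hn m i = 0.
Proof. by move=> H; rewrite /hn ifF; [rewrite ifF //|]; lia. Qed.

Lemma hn0 i : hn 0 i = 0.
Proof. by rewrite /hn andbF ltn0 andbF. Qed.

Definition Aop (v : nat -> C) (i : nat) : C :=
  (if i == 1%N then alpha * v 1%N else v i.-1) + v i.+1.

Lemma hn_step m i : (0 < i)%N ->
  Aop (hn m.+1) i = hn m.+2 i + hn m i +
    (if (m == 0%N) && (i == 1%N) then 1 else 0).
Proof.
move=> Hi; rewrite /Aop.
case: (ltngtP i 1) => [|Hi1|->]; first lia.
- idtac.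
  rewrite andbF addr0.
  case: (ltngtP (i.+1) m.+1) => H.
  +
    have [d ->] : exists d, m = (i + d.+1)%N by exists (m - i.+1)%N; lia.
    rewrite (@hn_lt _ i.-1 d.+2); [|lia|lia].
    rewrite (@hn_lt _ i.+1 d); [|lia|lia].
    rewrite (@hn_lt _ i d.+2); [|lia|lia].
    rewrite (@hn_lt _ i d); [|lia|lia]. by [].
  + case: (ltngtP i m.+1) => H2.
    * lia.
    * rewrite (@hn_gt m.+1 i.+1); last lia. rewrite (@hn_gt m i); last lia.
      case: (ltngtP i m.+2) => H3; first lia.
      -- rewrite !hn_gt; [by rewrite addr0|lia|lia].
      -- rewrite (@hn_eq m.+1 i.-1); [|lia|lia]. rewrite hn_eq; [|lia|lia]. by rewrite addr0.
    * rewrite (@hn_lt _ i.-1 0); [|lia|lia].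
      rewrite (@hn_gt _ i.+1); last lia.
      rewrite (@hn_lt _ i 0); [|lia|lia].
      rewrite (@hn_gt m i); last lia. by rewrite !addr0.
  + rewrite (@hn_lt _ i.-1 1); [|lia|lia].
    rewrite (@hn_eq _ i.+1); [|lia|lia].
    rewrite (@hn_lt _ i 1); [|lia|lia].
    rewrite (@hn_eq m i); [|lia|lia]. by [].
- rewrite andbT.
  case: m => [|m].
  + rewrite (@hn_eq 1 1) // (@hn_gt 1 2) // (@hn_lt 2 1 0) // hn0 /th /= expr0; ring.
  + case: m => [|m].
    * rewrite (@hn_lt 2 1 0) // (@hn_eq 2 2) // (@hn_lt 3 1 1) // (@hn_eq 1 1) //=.
      rewrite /th; ring.
    * rewrite (@hn_lt _ 1 m.+1); [|lia|lia].
      rewrite (@hn_lt _ 2 m); [|lia|lia].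
      rewrite (@hn_lt _ 1 m.+2); [|lia|lia].
      rewrite (@hn_lt _ 1 m); [|lia|lia]. rewrite /= /th !exprS; ring.
Qed.

Definition hz (m : int) (i : nat) : C :=
  match m with Posz k => hn k i | Negz _ => 0 end.

Lemma hz_pos (m : int) (k : nat) : m = k%:Z -> hz m = hn k.
Proof. by move=> ->. Qed.

Lemma hz_le0 (m : int) i : m <= 0 -> hz m i = 0.
Proof.
case: m => [k|k] //= H; have -> : k = 0%N by lia.
exact: hn0.
Qed.

Ltac case_ifs := repeat (case: eqP => ?); try (exfalso; lia).

Lemma Aop_h (m : int) i : (0 < i)%N ->
  Aop (hz m) i = hz (m + 1) i + hz (m - 1) i
    + (if (m == 1) && (i == 1%N) then 1 else 0)
    - (if (m == 0) && (i == 1%N) then alpha else 0).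
Proof.
move=> Hi; case: m => [k|k].
- case: k => [|k].
  + rewrite (@hz_pos (_ + 1) 1) // (@hz_le0 (_ - 1)) //.
    have -> : Aop (hz 0) i = 0 by rewrite /Aop /= !hn0 mulr0 addr0; case: ifP.
    rewrite /=.
    case: (ltngtP i 1) => H; first lia.
    * by rewrite hn_gt // !addr0 subr0.
    * by rewrite hn_eq // !addr0 subrr.
  + rewrite (@hz_pos (_ + 1) k.+2); last lia.
    rewrite (@hz_pos (_ - 1) k); last lia.
    rewrite [LHS](_ : _ = Aop (hn k.+1) i) // hn_step //.
    by case: (k =P 0%N) => Hk; case: (i =P 1%N) => Hi1 /=;
      rewrite ?andbT ?andbF; case_ifs; ring.
- rewrite [LHS](_ : _ = 0); last by rewrite /Aop /= mulr0 addr0; case: ifP.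
  rewrite (@hz_le0 (_ + 1)); last lia.
  rewrite (@hz_le0 (_ - 1)); last lia.
  rewrite /=. ring.
Qed.

Definition ind (j : int) (m : int) : C := if m == j then 1 else 0.

Lemma zpz_G n j : zpz_coef C n j = G n (ind (- j)).
Proof.
rewrite /zpz_coef /G big_mkord.
case E: (j + n%:Z) => [k|k].
- rewrite addrC exprD1n coef_sum; apply: eq_bigr => l _.
  rewrite coefMn -exprM coefXn /ind.
  have -> : (n%:Z - (2 * l)%N%:Z == - j) = (k == 2 * l)%N.
    by apply/eqP/eqP; lia.
  by case: (k == 2 * l)%N; rewrite ?mulr1 ?mulr0 ?mul0rn.
- rewrite big1 // => l _; rewrite /ind ifF ?mulr0 //; apply/eqP.
  have := ltn_ord l; lia.
Qed.

Ltac case_all := repeat (case: ifP => ?); try (exfalso; lia).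

Lemma Aalpha_val i k : (0 < i)%N -> (0 < k)%N ->
  Aalpha alpha i k = (if k.+1 == i then 1 else 0) + (if k == i.+1 then 1 else 0)
    + (if (i == 1%N) && (k == 1%N) then alpha else 0).
Proof.
move=> Hi Hk; rewrite /Aalpha /toeplitz /e11 Hi Hk /= zpz_G /G.
rewrite big_nat_recl // big_nat1 /ind bin0 bin1 /=.
case_all; ring.
Qed.

Lemma sum_ind a b c (F : nat -> C) :
  \sum_(a <= k < b) (if k == c then F k else 0) = if (a <= c < b)%N then F c else 0.
Proof.
elim: b => [|b IH]; first by rewrite big_geq //; case_all.
case: (leqP a b) => Hab.
- rewrite big_nat_recr //= IH; case: (b =P c) => [E|E]; [subst b|]; case_all; ring.
- by rewrite big_geq //; case_all.
Qed.

Lemma Aalpha_sum i (v : nat -> C) : (0 < i)%N ->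
  \sum_(1 <= k < i.+2) Aalpha alpha i k * v k = Aop v i.
Proof.
move=> Hi.
rewrite (@eq_big_nat _ _ _ _ _ _ (fun k => (if k == i.-1 then v k else 0) +
   (if k == i.+1 then v k else 0) +
   (if k == 1%N then (if i == 1%N then alpha * v k else 0) else 0))); last first.
  move=> k Hk; rewrite Aalpha_val //; last lia.
  case_all; ring.
rewrite !big_split /= !sum_ind /Aop.
case_all; ring.
Qed.

Lemma Aop_G n (w : int -> nat -> C) i :
  Aop (fun k => G n (fun m => w m k)) i = G n (fun m => Aop (w m) i).
Proof.
rewrite /Aop /G; case: (i == 1%N) => /=; rewrite ?mulr_sumr -big_split;
  apply: eq_bigr => l _; rewrite /=; ring.
Qed.

Lemma Aop_ext (v w : nat -> C) i : (forall k, (0 < k)%N -> v k = w k) ->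
  (0 < i)%N -> Aop v i = Aop w i.
Proof.
move=> H Hi; rewrite /Aop; case: ifP => Hi1; rewrite !H //; lia.
Qed.

Lemma Aop_add (v w : nat -> C) i : Aop (fun k => v k + w k) i = Aop v i + Aop w i.
Proof. rewrite /Aop; case: ifP => _; ring. Qed.

Lemma G_ind_sym n : G n (ind 1) = G n (ind (-1)).
Proof.
rewrite [RHS]G_sym; apply: G_ext => m; rewrite /ind.
by rewrite eqr_oppLR.
Qed.

Lemma main n i : (0 < i)%N ->
  Apow alpha n i 1 = G n (fun m => hz m i + ind (i%:Z - 1) m).
Proof.
elim: n i => [|n IH] i Hi.
  rewrite /Apow /= /simx1 /G big_nat1 bin0 mul1r /= hn0 add0r /ind.
  by case_all.
rewrite /Apow iterS -/(Apow alpha n) /mul_lower_hess Aalpha_sum //.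
rewrite (@Aop_ext _ (fun k => G n (fun m => hz m k + ind (k%:Z - 1) m)));
  [| by move=> k Hk; exact: IH | by []].
rewrite Aop_G G_pascal -G_add.
transitivity (G n (fun m => (hz (m + 1) i + ind (i%:Z - 1) (m + 1)
   + (hz (m - 1) i + ind (i%:Z - 1) (m - 1)))
   + (if i == 1%N then ind 1 m - ind (-1) m else 0))).
  apply: G_ext => m; rewrite Aop_add Aop_h // /ind /Aop; case_all; ring.
rewrite G_add.
have -> : G n (fun m => if i == 1%N then ind 1 m - ind (-1) m else 0) = 0.
  case: (i == 1%N) => /=; first by rewrite G_sub G_ind_sym subrr.
  by rewrite /G big1 // => l _; rewrite mulr0.
by rewrite addr0.
Qed.

Lemma hpoly_coef m i : (0 < m)%N -> (0 < i)%N -> (hpoly alpha m)`_i = hn m i.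
Proof.
move=> Hm Hi; rewrite /hpoly; case: ifP => [/eqP ->|Hm1].
  rewrite coefZ coefX.
  case: (i =P 1%N) => [->|Hi1]; first by rewrite (@hn_eq 1 1) // mulr1.
  by rewrite hn_gt ?mulr0 //; lia.
rewrite coefD !coefZ coef_sum coefXn.
rewrite (eq_bigr (fun j => if j == i then alpha ^+ (m - j - 1) else 0)); last first.
  by move=> j _; rewrite coefZ coefXn eq_sym; case: (j == i); rewrite ?mulr1 ?mulr0.
rewrite sum_ind /hn /th.
case: (i =P m) => [E|E]; case_all; rewrite /=; ring.
Qed.

Lemma G_hz n i : (0 < n)%N -> (0 < i)%N ->
  G n (fun m => hz m i) =
  \sum_(0 <= l < ((n.-1)./2).+1) 'C(n, l)%:R * (hpoly alpha (n - 2 * l))`_i.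
Proof.
move=> Hn Hi.
have Hh := odd_double_half (n.-1).
have Ho : (odd (n.-1) <= 1)%N by case: odd.
rewrite -muln2 in Hh.
rewrite /G (@big_cat_nat _ _ _ ((n.-1)./2).+1) /=; [|lia|lia].
rewrite [X in _ + X]big_nat_cond [X in _ + X]big1 ?addr0; last first.
  move=> l /andP [/andP [H1 H2] _]; rewrite hz_le0 ?mulr0 //; lia.
apply: eq_big_nat => l Hl.
rewrite (@hz_pos _ (n - 2 * l)); last lia.
by rewrite hpoly_coef //; lia.
Qed.
End Work.

Theorem theorem3 (C : numClosedFieldType) (alpha : C) (n : nat) :
  (1 <= n)%N ->
  forall i : nat, (1 <= i)%N ->
    kcol alpha n i =
    \sum_(0 <= l < ((n.-1)./2).+1) 'C(n, l)%:R * (hpoly alpha (n - 2 * l))`_i.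
Proof.
move=> Hn i Hi.
rewrite -G_hz // /kcol /Kmat main // /toeplitz Hi /= zpz_G opprB -G_sub.
by apply: G_ext => m; rewrite addrK.
Qed.
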